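(* Let $$A = \begin{pmatrix} p & q \\ r & s \end{pmatrix} \qquad \text{and} \qquad B = \begin{pmatrix} p' & q' \\ r' & s' \end{pmatrix}$$ be elements of $Y(\mathbb{Z}[\omega]) - \{ I_2 \}$. If $rs' - r's = 0$ then $A = B$.
   Context: Let $\omega = e^{2\pi i/3}$ and let $\mathbb{Z}[\omega]$ be the ring of Eisenstein integers (a PID), with unit group $\mathbb{Z}[\omega]^{\times} = \{\pm 1, \pm\omega, \pm\omega^2\}$. Fix a set of representatives $(\mathbb{Z}[\omega] - \{0\})/\mathbb{Z}[\omega]^{\times}$ of the nonzero elements up to units, and for each nonzero $c$ a set of representatives $\mathbb{Z}[\omega]/c\mathbb{Z}[\omega]$ of the residue classes modulo $c$ (these representatives are regarded as elements of $\mathbb{Z}[\omega]$). Define $$Y(\mathbb{Z}[\omega]) = \Big\{ \begin{pmatrix} a & b \\ c & d \end{pmatrix} \in SL_2(\mathbb{Z}[\omega]) \;\Big\vert\; c \in (\mathbb{Z}[\omega] - \{0\})/\mathbb{Z}[\omega]^{\times},\ a \in \mathbb{Z}[\omega]/c\mathbb{Z}[\omega] \Big\} \cup \{ I_2 \},$$ where $I_2$ is the $2\times 2$ identity matrix. *)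

(* Defs.v *)
(* The Eisenstein integers Z[w], w = exp(2 pi i/3), are
   modelled concretely as pairs (a,b) of integers standing for a + b w,
   with multiplication determined by w^2 = -1 - w (w^2 + w + 1 = 0). *)
From HB Require Import structures.
From mathcomp Require Import all_boot all_order all_algebra.
From mathcomp Require Import ring.
Set Implicit Arguments. Unset Strict Implicit. Unset Printing Implicit Defensive.
Import Order.TTheory GRing.Theory Num.Theory.
Local Open Scope ring_scope.

Variant eis := Eis of int & int.

Definition eis_re (x : eis) := let: Eis a _ := x in a.
Definition eis_om (x : eis) := let: Eis _ b := x in b.
Definition eis2p (x : eis) : int * int := (eis_re x, eis_om x).
Definition p2eis (p : int * int) : eis := Eis p.1 p.2.
Lemma eis2pK : cancel eis2p p2eis. Proof. by case. Qed.

HB.instance Definition _ := Countable.copy eis (can_type eis2pK).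

Definition eis_zero := Eis 0 0.
Definition eis_one := Eis 1 0.
Definition eis_w := Eis 0 1.
Definition eis_opp (x : eis) := Eis (- eis_re x) (- eis_om x).
Definition eis_add (x y : eis) := Eis (eis_re x + eis_re y) (eis_om x + eis_om y).
(* (a + b w)(c + d w) = (ac - bd) + (ad + bc - bd) w *)
Definition eis_mul (x y : eis) :=
  Eis (eis_re x * eis_re y - eis_om x * eis_om y)
      (eis_re x * eis_om y + eis_om x * eis_re y - eis_om x * eis_om y).

Lemma eis_addA : associative eis_add.
Proof. by move=> [a b] [c d] [e f]; rewrite /eis_add /=; congr Eis; ring. Qed.
Lemma eis_addC : commutative eis_add.
Proof. by move=> [a b] [c d]; rewrite /eis_add /=; congr Eis; ring. Qed.
Lemma eis_add0 : left_id eis_zero eis_add.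
Proof. by move=> [a b]; rewrite /eis_add /=; congr Eis; ring. Qed.
Lemma eis_addN : left_inverse eis_zero eis_opp eis_add.
Proof. by move=> [a b]; rewrite /eis_add /=; congr Eis; ring. Qed.

HB.instance Definition _ := GRing.isZmodule.Build eis eis_addA eis_addC eis_add0 eis_addN.

Lemma eis_mulA : associative eis_mul.
Proof. by move=> [a b] [c d] [e f]; rewrite /eis_mul /=; congr Eis; ring. Qed.
Lemma eis_mulC : commutative eis_mul.
Proof. by move=> [a b] [c d]; rewrite /eis_mul /=; congr Eis; ring. Qed.
Lemma eis_mul1 : left_id eis_one eis_mul.
Proof. by move=> [a b]; rewrite /eis_mul /=; congr Eis; ring. Qed.
Lemma eis_mulDl : left_distributive eis_mul eis_add.
Proof. by move=> [a b] [c d] [e f]; rewrite /eis_mul /= /eis_add /=; congr Eis; ring. Qed.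
Lemma eis_one_neq0 : eis_one != (0 : eis).
Proof. by []. Qed.

HB.instance Definition _ :=
  GRing.Zmodule_isComNzRing.Build eis eis_mulA eis_mulC eis_mul1 eis_mulDl eis_one_neq0.

Lemma eis_w_cyclo : eis_w * eis_w + eis_w + 1 = 0.
Proof. by []. Qed.

Definition eis_unit (u : eis) : Prop := exists v : eis, u * v = 1.

Definition eis_assoc (x y : eis) : Prop := exists u : eis, eis_unit u /\ y = u * x.

Definition eis_dvd (c x : eis) : Prop := exists k : eis, x = c * k.

Definition nonzero_unit_reps (S : eis -> Prop) : Prop :=
  (forall x, S x -> x <> 0) /\
  (forall c, c <> 0 -> exists x, S x /\ eis_assoc c x) /\
  (forall x y, S x -> S y -> eis_assoc x y -> x = y).

Definition residue_reps (c : eis) (T : eis -> Prop) : Prop :=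
  (forall a, exists x, T x /\ eis_dvd c (a - x)) /\
  (forall x y, T x -> T y -> eis_dvd c (x - y) -> x = y).

Definition i0 : 'I_2 := ord0.
Definition i1 : 'I_2 := ord_max.

(* Y(Z[w]) for the chosen representative systems S and T:
   M = [[a, b], [c, d]] in SL_2(Z[w]) with c in S and a in T c, or M = I_2. *)
Definition inY (S : eis -> Prop) (T : eis -> eis -> Prop) (M : 'M[eis]_2) : Prop :=
  (\det M = 1 /\ S (M i1 i0) /\ T (M i1 i0) (M i0 i0)) \/ M = 1%:M.

(* Main.v *)
Require Import Defs.
From mathcomp Require Import all_boot all_order all_algebra ring.
Import Order.TTheory GRing.Theory Num.Theory.
Local Open Scope ring_scope.
Lemma det22 (R : comNzRingType) (M : 'M[R]_2) :
  \det M = M i0 i0 * M i1 i1 - M i0 i1 * M i1 i0.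
Proof.
rewrite (expand_det_row _ i0) !big_ord_recl big_ord0 /cofactor !det_mx11 /=.
rewrite !mxE /= !expr0 !expr1 /=.
try have -> : lift i0 0 = i1 by apply/val_inj.
try have -> : lift ord0 (0 : 'I_1) = i1 by apply/val_inj.
try have -> : lift (lift ord0 ord0) (0 : 'I_1) = i0 by apply/val_inj.
try have -> : (ord0 : 'I_2) = i0 by apply/val_inj.
rewrite addr0 mul1r mulN1r mulrN.
by have -> : lift i1 (0 : 'I_1) = i0 by apply/val_inj.
Qed.

Definition eN (x : eis) : int := eis_re x * eis_re x - eis_re x * eis_om x + eis_om x * eis_om x.

Lemma eN_mul x y : eN (x * y) = eN x * eN y.
Proof. case: x => a b; case: y => c d. rewrite /eN /=. ring. Qed.

Lemma eN0 x : eN x = 0 -> x = 0.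
Proof.
case: x => a b; rewrite /eN /= => h.
have hb : b = 0.
  apply/eqP; apply: contraT => nb.
  have : 0 < (2*a - b)^+2 + 3 * b^+2.
    apply: ltr_wpDl; first exact: sqr_ge0.
    by rewrite pmulr_rgt0 // exprn_even_gt0.
  have -> : (2*a - b)^+2 + 3 * b^+2 = 4 * (a * a - a * b + b * b) by ring.
  by rewrite h mulr0 ltxx.
subst b.
have ha : a * a = 0 by move: h; rewrite !mulr0 subr0 addr0.
by move/eqP: ha; rewrite mulf_eq0 orbb => /eqP ->.
Qed.

Lemma eis_cancel (r x : eis) : r <> 0 -> r * x = 0 -> x = 0.
Proof.
move=> nr /(congr1 eN); rewrite eN_mul.
have -> : eN 0 = 0 by [].
move/eqP; rewrite mulf_eq0 => /orP [/eqP/eN0 //|/eqP/eN0 //].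
Qed.

Arguments eis_cancel {r x}.
Lemma ord2 (i : 'I_2) : i = i0 \/ i = i1.
Proof. by case: i => [[|[|//]]] h; [left|right]; apply/val_inj. Qed.

Theorem lemma2p13 (S : eis -> Prop) (T : eis -> eis -> Prop)
  (hS : nonzero_unit_reps S)
  (hT : forall c : eis, c <> 0 -> residue_reps c (T c))
  (A B : 'M[eis]_2)
  (hA : inY S T A) (hB : inY S T B)
  (hA1 : A <> 1%:M) (hB1 : B <> 1%:M)
  (hrs : A i1 i0 * B i1 i1 - B i1 i0 * A i1 i1 = 0) :
  A = B.
Proof.
case: hA => [[dA [SA TA]]|//]; case: hB => [[dB [SB TB]]|//].
rewrite det22 in dA; rewrite det22 in dB.
case: hS => [hS0 [_ hSu]].
have nr := hS0 _ SA.
have e1 : B i1 i0 = A i1 i0 * (A i0 i0 * B i1 i1 - A i0 i1 * B i1 i0).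
  apply/eqP; rewrite -subr_eq0.
  have -> : B i1 i0 - A i1 i0 * (A i0 i0 * B i1 i1 - A i0 i1 * B i1 i0) =
    B i1 i0 * (1 - (A i0 i0 * A i1 i1 - A i0 i1 * A i1 i0)) - A i0 i0 * (A i1 i0 * B i1 i1 - B i1 i0 * A i1 i1) by ring.
  by rewrite dA hrs subrr mulr0 mulr0 subr0.
have e2 : A i1 i0 = B i1 i0 * (B i0 i0 * A i1 i1 - B i0 i1 * A i1 i0).
  apply/eqP; rewrite -subr_eq0.
  have -> : A i1 i0 - B i1 i0 * (B i0 i0 * A i1 i1 - B i0 i1 * A i1 i0) =
    A i1 i0 * (1 - (B i0 i0 * B i1 i1 - B i0 i1 * B i1 i0)) + B i0 i0 * (A i1 i0 * B i1 i1 - B i1 i0 * A i1 i1) by ring.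
  by rewrite dB hrs subrr mulr0 mulr0 addr0.
set k := (A i0 i0 * B i1 i1 - A i0 i1 * B i1 i0) in e1.
set m := (B i0 i0 * A i1 i1 - B i0 i1 * A i1 i0) in e2.
have km : k * m = 1.
  apply/eqP; rewrite -subr_eq0; apply/eqP; apply: (eis_cancel nr).
  have -> : A i1 i0 * (k * m - 1) = (A i1 i0 * k) * m - A i1 i0 by ring.
  by rewrite -e1 -e2 subrr.
have err : B i1 i0 = A i1 i0.
  apply: hSu => //; exists m; split; first by exists k; rewrite mulrC.
  by rewrite e2 mulrC.
have ess : B i1 i1 = A i1 i1.
  apply/eqP; rewrite -subr_eq0; apply/eqP; apply: (eis_cancel nr).
  have -> : A i1 i0 * (B i1 i1 - A i1 i1) = A i1 i0 * B i1 i1 - B i1 i0 * A i1 i1 by rewrite err; ring.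
  exact: hrs.
have [_ hTu] := hT _ nr.
have epp : A i0 i0 = B i0 i0.
  apply: hTu => //; first by rewrite -err.
  exists (A i0 i0 * (A i0 i1 - B i0 i1) - (A i0 i0 - B i0 i0) * A i0 i1).
  apply/eqP; rewrite -subr_eq0.
  have -> : A i0 i0 - B i0 i0 - A i1 i0 * (A i0 i0 * (A i0 i1 - B i0 i1) - (A i0 i0 - B i0 i0) * A i0 i1)
   = (A i0 i0 - B i0 i0) * (1 - (A i0 i0 * A i1 i1 - A i0 i1 * A i1 i0))
     + A i0 i0 * ((A i0 i0 * A i1 i1 - A i0 i1 * A i1 i0) - (B i0 i0 * B i1 i1 - B i0 i1 * B i1 i0))
     by rewrite err ess; ring.
  by rewrite dA dB !subrr !mulr0 !addr0.
have eqq : A i0 i1 = B i0 i1.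
  apply/eqP; rewrite -subr_eq0; apply/eqP; apply: (eis_cancel nr).
  have -> : A i1 i0 * (A i0 i1 - B i0 i1) =
     (B i0 i0 * B i1 i1 - B i0 i1 * B i1 i0) - (A i0 i0 * A i1 i1 - A i0 i1 * A i1 i0)
     by rewrite err ess epp; ring.
  by rewrite dA dB subrr.
apply/matrixP => i j.
by case: (ord2 i) => ->; case: (ord2 j) => ->.
Qed.
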